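(* Let $V$ be a nonzero finite-dimensional complex vector space with a norm $\lVert\cdot\rVert$. Let $x,y\in\mathrm U(V)$ be such that the subgroup of $\mathrm{GL}(V)$ generated by $x$ and $y$ is finite, and suppose $\lVert \mathrm{id}_V-x\rVert_{\mathrm{op}}<1/2$ and $\lVert \mathrm{id}_V-y\rVert_{\mathrm{op}}<1/2$. Then $xy=yx$.
   Context: $\mathrm U(V)$ denotes the group of linear isometries of $V$, i.e. the set of $x\in\mathrm{GL}(V)$ with $\lVert xv\rVert=\lVert v\rVert$ for all $v\in V$. For $a\in\mathrm{End}(V)$, the operator norm is $\lVert a\rVert_{\mathrm{op}}=\max\{\lVert av\rVert : v\in V,\ \lVert v\rVert=1\}$. *)

(* Defs.v *)
From HB Require Import structures.
From mathcomp Require Import all_boot all_order all_algebra.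
From mathcomp Require Import all_classical all_reals.
From mathcomp.real_closed Require Import complex.
Set Implicit Arguments. Unset Strict Implicit. Unset Printing Implicit Defensive.
Import Order.TTheory GRing.Theory Num.Theory.
Local Open Scope ring_scope.
Local Open Scope classical_set_scope.

(* V = C^n (column vectors), C = R[i] with R : realType.  Matrices act on the left. *)

Definition is_norm (R : realType) (n : nat) (N : 'cV[R[i]]_n -> R) : Prop :=
  [/\ forall v, 0 <= N v,
      forall v, N v = 0 -> v = 0,
      forall (c : R[i]) v, N (c *: v) = ComplexField.Normc.normc c * N v
    & forall v w, N (v + w) <= N v + N w].

Definition opnorm (R : realType) (n : nat) (N : 'cV[R[i]]_n -> R)
  (a : 'M[R[i]]_n) : R :=
  sup [set N (a *m v) | v in [set v | N v = 1]].

Definition isometry_mx (R : realType) (n : nat) (N : 'cV[R[i]]_n -> R)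
  (x : 'M[R[i]]_n) : Prop :=
  x \in unitmx /\ forall v, N (x *m v) = N v.

Inductive gen2 (R : realType) (n : nat) (x y : 'M[R[i]]_n) : 'M[R[i]]_n -> Prop :=
  | gen2_1 : gen2 x y 1%:M
  | gen2_x : gen2 x y x
  | gen2_y : gen2 x y y
  | gen2_mul a b : gen2 x y a -> gen2 x y b -> gen2 x y (a *m b)
  | gen2_inv a : gen2 x y a -> gen2 x y (invmx a).

Definition gen2_set (R : realType) (n : nat) (x y : 'M[R[i]]_n) : set 'M[R[i]]_n :=
  [set a | gen2 x y a].

(* Main.v *)
Require Import Defs.
From HB Require Import structures.
From mathcomp Require Import all_boot all_order all_algebra all_field.
From mathcomp Require Import cyclic.
From mathcomp Require Import all_classical all_reals.
From mathcomp.real_closed Require Import complex.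
From mathcomp Require Import lra.
Import Order.TTheory GRing.Theory Num.Theory.
Local Open Scope ring_scope.
Local Open Scope classical_set_scope.

Local Notation nc := ComplexField.Normc.normc.

Lemma nc_ge0 (R : realType) (c : R[i]) : 0 <= nc c.
Proof. by case: c => a b; rewrite /= sqrtr_ge0. Qed.

Lemma nc_real (R : realType) (r : R) : 0 <= r -> nc (r%:C)%C = r.
Proof. by move=> r0; rewrite /= expr0n /= addr0 sqrtr_sqr ger0_norm. Qed.

Lemma ncX (R : realType) (c : R[i]) k : nc (c ^+ k) = nc c ^+ k.
Proof.
elim: k => [|k IH]; first by rewrite !expr0 ComplexField.Normc.normc1.
by rewrite !exprS ComplexField.Normc.normcM IH.
Qed.

Lemma nc_N1 (R : realType) : nc (-1 : R[i]) = 1.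
Proof. by rewrite normcN ComplexField.Normc.normc1. Qed.

Section NormFacts.
End NormFacts.

Lemma N0 {R : realType} {n} {N : 'cV[R[i]]_n -> R} : is_norm N -> N 0 = 0.
Proof.
case=> _ _ hZ _; have := hZ 0 0; rewrite scale0r ComplexField.Normc.normc0 mul0r.
by [].
Qed.

Lemma NN {R : realType} {n} {N : 'cV[R[i]]_n -> R} : is_norm N -> forall v, N (- v) = N v.
Proof. by case=> _ _ hZ _ v; rewrite -scaleN1r hZ nc_N1 mul1r. Qed.

Lemma N_eq0 {R : realType} {n} {N : 'cV[R[i]]_n -> R} : is_norm N -> forall v, N v <= 0 -> v = 0.
Proof. by case=> h0 h1 _ _ v hv; apply: h1; apply/eqP; rewrite eq_le hv h0. Qed.

Lemma N_sum {R : realType} {n} {N : 'cV[R[i]]_n -> R} : is_norm N ->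
  forall k (f : 'I_k -> 'cV[R[i]]_n), N (\sum_(i < k) f i) <= \sum_(i < k) N (f i).
Proof.
move=> hN; case: (hN) => _ _ _ hD.
elim=> [|k IH] f; first by rewrite !big_ord0 (N0 hN).
rewrite !big_ord_recr /=; apply: le_trans (hD _ _) _; rewrite lerD2r; exact: IH.
Qed.

Lemma N_unit {R : realType} {n} {N : 'cV[R[i]]_n.+1 -> R} : is_norm N ->
  exists v, N v = 1.
Proof.
move=> hN; case: (hN) => h0 h1 hZ _.
set v0 : 'cV[R[i]]_n.+1 := delta_mx 0 0.
have nz : N v0 != 0.
  apply/eqP => /h1 /matrixP /(_ 0 0); rewrite !mxE /= => /eqP; by rewrite oner_eq0.
exists (((N v0)^-1)%:C%C *: v0); rewrite hZ nc_real ?invr_ge0 //.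
by rewrite mulVf.
Qed.

Lemma opnorm_le {R : realType} {n} {N : 'cV[R[i]]_n.+1 -> R} (a : 'M[R[i]]_n.+1) (K : R) :
  is_norm N -> (forall v, N v = 1 -> N (a *m v) <= K) -> opnorm N a <= K.
Proof.
move=> hN hK; apply: ge_sup.
  by have [v hv] := N_unit hN; exists (N (a *m v)), v.
by move=> _ [v hv <-]; exact: hK.
Qed.

Lemma opnorm_ub {R : realType} {n} {N : 'cV[R[i]]_n.+1 -> R} (a : 'M[R[i]]_n.+1) (K : R) :
  is_norm N -> (forall v, N v = 1 -> N (a *m v) <= K) ->
  forall v, N (a *m v) <= opnorm N a * N v.
Proof.
move=> hN hK v; case: (hN) => h0 h1 hZ _.
have hub : has_ubound [set N (a *m v) | v in [set v | N v = 1]].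
  by exists K => _ [w hw <-]; exact: hK.
have [Nv0|Nvne] := eqVneq (N v) 0.
  by rewrite (h1 _ Nv0) mulmx0 (N0 hN) mulr0.
have Nvp : 0 < N v by rewrite lt_def Nvne h0.
set w := ((N v)^-1)%:C%C *: v.
have Nw : N w = 1 by rewrite hZ nc_real ?invr_ge0 ?h0 // mulVf.
have := ub_le_sup hub (ex_intro2 _ _ w Nw erefl).
rewrite /w -scalemxAr hZ nc_real ?invr_ge0 ?h0 //.
by rewrite -(ler_pM2r Nvp) mulrAC mulVf // mul1r.
Qed.

Lemma isom_one_sub {R : realType} {n} {N : 'cV[R[i]]_n.+1 -> R} (h : 'M[R[i]]_n.+1) :
  is_norm N -> (forall v, N (h *m v) = N v) ->
  forall v, N v = 1 -> N ((1%:M - h) *m v) <= 2.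
Proof.
move=> hN hh v hv; case: (hN) => _ _ _ hD.
rewrite mulmxBl mul1mx; apply: le_trans (hD _ _) _.
by rewrite (NN hN) hh hv.
Qed.

Lemma opnorm_ge0 {R : realType} {n} {N : 'cV[R[i]]_n.+1 -> R} (h : 'M[R[i]]_n.+1) :
  is_norm N -> (forall v, N (h *m v) = N v) -> 0 <= opnorm N h.
Proof.
Abort.

Lemma opnorm_bound {R : realType} {n} {N : 'cV[R[i]]_n.+1 -> R} (h : 'M[R[i]]_n.+1) :
  is_norm N -> (forall v, N (h *m v) = N v) ->
  forall v, N ((1%:M - h) *m v) <= opnorm N (1%:M - h) * N v.
Proof. move=> hN hh; exact: (opnorm_ub (1%:M - h) 2 hN (isom_one_sub h hN hh)). Qed.

Lemma opnorm_ge0 {R : realType} {n} {N : 'cV[R[i]]_n.+1 -> R} (h : 'M[R[i]]_n.+1) :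
  is_norm N -> (forall v, N (h *m v) = N v) -> 0 <= opnorm N (1%:M - h).
Proof.
move=> hN hh; have [v hv] := N_unit hN; case: (hN) => h0 _ _ _.
have := opnorm_bound h hN hh v; rewrite hv mulr1; exact: le_trans.
Qed.

Lemma col_eq0 {R : realType} {n} (A : 'M[R[i]]_n.+1) :
  (forall v : 'cV[R[i]]_n.+1, A *m v = 0) -> A = 0.
Proof.
move=> hA; apply/matrixP => i j; have := hA (delta_mx j 0); rewrite -colE.
by move/matrixP/(_ i 0); rewrite !mxE.
Qed.

Lemma zid (V : zmodType) (o x y a b : V) : o - x + a - y + x - b + y - o = a - b.
Proof.
rewrite -!addrA addrC -!addrA addNr addr0 (addrC (-b) y) (addrCA x y) addKr.
by rewrite (addrCA a x) addKr.
Qed.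

Lemma comm_identity {R : realType} {n} (x g : 'M[R[i]]_n.+1) :
  x \in unitmx -> g \in unitmx ->
  1%:M - x *m g *m invmx x *m invmx g =
  ((1%:M - g) *m (1%:M - x) - (1%:M - x) *m (1%:M - g)) *m (invmx x *m invmx g).
Proof.
move=> ux ug.
have -> : (1%:M - g) *m (1%:M - x) - (1%:M - x) *m (1%:M - g) = g *m x - x *m g.
  rewrite !mulmxBl !mulmxBr !mul1mx !mulmx1.
  by rewrite !opprB !addrA zid.
rewrite mulmxBl -!mulmxA (mulmxA x (invmx x)) (mulmxV ux) mul1mx (mulmxV ug).
by rewrite !mulmxA.
Qed.

Lemma isom_inv {R : realType} {n} {N : 'cV[R[i]]_n.+1 -> R} (a : 'M[R[i]]_n.+1) :
  a \in unitmx -> (forall v, N (a *m v) = N v) -> forall v, N (invmx a *m v) = N v.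
Proof. by move=> ua ha v; rewrite -ha mulKVmx. Qed.

Lemma comm_bound {R : realType} {n} {N : 'cV[R[i]]_n.+1 -> R} (x g : 'M[R[i]]_n.+1) :
  is_norm N -> x \in unitmx -> g \in unitmx ->
  (forall v, N (x *m v) = N v) -> (forall v, N (g *m v) = N v) ->
  opnorm N (1%:M - x *m g *m invmx x *m invmx g)
    <= 2 * (opnorm N (1%:M - x) * opnorm N (1%:M - g)).
Proof.
move=> hN ux ug hx hg; apply: opnorm_le => // v hv.
case: (hN) => h0 _ _ hD.
rewrite comm_identity // -mulmxA (mulmxBl _ _ (_ *m v)) -!mulmxA.
set u := invmx x *m (invmx g *m v).
have Nu : N u = 1 by rewrite /u (isom_inv x ux hx) (isom_inv g ug hg).
have gx0 := opnorm_ge0 x hN hx; have gg0 := opnorm_ge0 g hN hg.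
have b1 : N ((1%:M - g) *m ((1%:M - x) *m u)) <= opnorm N (1%:M - x) * opnorm N (1%:M - g).
  apply: le_trans (opnorm_bound g hN hg _) _.
  rewrite mulrC; apply: ler_wpM2r => //.
  by apply: le_trans (opnorm_bound x hN hx _) _; rewrite Nu mulr1.
have b2 : N ((1%:M - x) *m ((1%:M - g) *m u)) <= opnorm N (1%:M - x) * opnorm N (1%:M - g).
  apply: le_trans (opnorm_bound x hN hx _) _.
  apply: ler_wpM2l => //.
  by apply: le_trans (opnorm_bound g hN hg _) _; rewrite Nu mulr1.
apply: le_trans (hD _ _) _; rewrite (NN hN) -/u.
by rewrite mulr_natl mulr2n; exact: lerD.
Qed.

Lemma unit_mx {R : realType} {n} (a : 'M[R[i]]_n.+1) : a \in unitmx -> a \is a GRing.unit.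
Proof. by []. Qed.

Lemma gen2_iso {R : realType} {n} {N : 'cV[R[i]]_n.+1 -> R} (x y a : 'M[R[i]]_n.+1) :
  isometry_mx N x -> isometry_mx N y -> gen2 x y a -> isometry_mx N a.
Proof.
move=> hx hy; elim => //.
- by split; [exact: unitmx1 | move=> v; rewrite mul1mx].
- move=> a' b _ [ua ha] _ [ub hb]; split; first by rewrite unitmx_mul ua ub.
  by move=> v; rewrite -mulmxA ha hb.
- move=> a' _ [ua ha]; split; first by rewrite unitmx_inv.
  exact: isom_inv.
Qed.

Lemma gen2X {R : realType} {n} (x y a : 'M[R[i]]_n.+1) k : gen2 x y a -> gen2 x y (a ^+ k).
Proof.
move=> ha; elim: k => [|k IH]; first by rewrite expr0 -idmxE; exact: gen2_1.
by rewrite exprS -mulmxE; exact: gen2_mul.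
Qed.

Lemma gen2_order {R : realType} {n} (x y a : 'M[R[i]]_n.+1) :
  finite_set (gen2_set x y) -> gen2 x y a -> a \in unitmx ->
  exists M, (0 < M)%N /\ a ^+ M = 1.
Proof.
move=> /finite_fsetP [X hX] ha ua.
pose s := [seq a ^+ k | k <- iota 0 (size (finmap.enum_fset X)).+1].
have sub : {subset s <= finmap.enum_fset X}.
  move=> b /mapP [k _ ->]; have : gen2_set x y (a ^+ k) by exact: gen2X.
  by rewrite hX.
have : ~~ uniq s.
  apply/negP => us; have := uniq_leq_size us sub.
  by rewrite size_map size_iota ltnn.
case/(uniqPn 0) => i [j [ij js]]; rewrite size_map size_iota in js.
rewrite !(nth_map 0) ?size_iota ?(ltn_trans ij) // !nth_iota ?(ltn_trans ij) // !add0n.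
move=> eij; exists (j - i)%N; split; first by rewrite subn_gt0.
have ui : a ^+ i \is a GRing.unit by rewrite unitrX.
apply: (mulrI ui); rewrite -exprD subnKC ?(ltnW ij) // mulr1; exact: esym.
Qed.

Lemma prim_root_exists {R : realType} M : (0 < M)%N -> exists w : R[i], M.-primitive_root w.
Proof.
pose p : {poly R[i]} := 'X^M - 1; have [r Dp] := closed_field_poly_normal p.
move=> M_gt0; rewrite (monicP _) ?monicXnsubC // scale1r in Dp.
have rn1: all M.-unity_root r by apply/allP=> z; rewrite -root_prod_XsubC -Dp.
have sz_r: (M < (size r).+1)%N.
  by rewrite -(size_prod_XsubC r id) -Dp size_XnsubC.
have [|z] := hasP (has_prim_root M_gt0 rn1 _ sz_r); last by exists z.
by rewrite -separable_prod_XsubC -Dp separable_Xn_sub_1 // pnatr_eq0 -lt0n.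
Qed.

Lemma geom_sum0 {R : realType} (q : R[i]) M : q ^+ M = 1 -> q != 1 ->
  \sum_(k < M) q ^+ k = 0.
Proof.
move=> qM q1; have := subrX1 q M; rewrite qM subrr => /esym/eqP.
by rewrite mulf_eq0 subr_eq0 (negPf q1) /= => /eqP.
Qed.

Lemma prim_nc1 {R : realType} {M} {w : R[i]} : (0 < M)%N -> M.-primitive_root w -> nc w = 1.
Proof.
move=> M0 pw; have := congr1 (@ComplexField.Normc.normc R) (prim_expr_order pw).
rewrite ncX ComplexField.Normc.normc1 => /eqP; rewrite pexpr_eq1 ?nc_ge0 -?lt0n //.
by move/eqP.
Qed.

Lemma prim_neq0 {R : realType} {M} {w : R[i]} : (0 < M)%N -> M.-primitive_root w -> w != 0.
Proof.
move=> M0 pw; apply/eqP => w0; have := prim_expr_order pw; rewrite w0 expr0n.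
by move: pw; case: M M0 => // M _ _ /eqP; rewrite eq_sym oner_eq0.
Qed.

Definition avg {R : realType} {n} (M : nat) (u : 'M[R[i]]_n.+1) (q : R[i]) : 'M[R[i]]_n.+1 :=
  ((M%:R : R[i])^-1) *: \sum_(k < M) (q^-1) ^+ k *: u ^+ k.

Lemma avg_eig {R : realType} {n} M (u : 'M[R[i]]_n.+1) (q : R[i]) :
  u ^+ M = 1 -> q ^+ M = 1 -> q != 0 -> u * avg M u q = q *: avg M u q.
Proof.
move=> uM qM q0; rewrite /avg -scalerAr scalerA mulrC -scalerA; congr (_ *: _).
rewrite mulr_sumr scaler_sumr.
pose f (k : nat) := (q * q^-1 ^+ k) *: u ^+ k.
have -> : \sum_(i < M) u * (q^-1 ^+ i *: u ^+ i) = \sum_(i < M) f i.+1.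
  apply: eq_bigr => i _; rewrite /f -scalerAr -exprS; congr (_ *: _).
  by rewrite exprS mulrA mulfV ?invr_eq0 // mul1r.
have -> : \sum_(i < M) q *: (q^-1 ^+ i *: u ^+ i) = \sum_(i < M) f i.
  by apply: eq_bigr => i _; rewrite /f scalerA.
have e : f M = f 0%N by rewrite /f uM exprVn qM invr1 !expr0.
have h1 : \sum_(i < M.+1) f i = f 0%N + \sum_(i < M) f i.+1 by rewrite big_ord_recl.
have h2 : \sum_(i < M.+1) f i = \sum_(i < M) f i + f M by rewrite big_ord_recr.
have h := etrans (esym h1) h2; rewrite e addrC in h; exact: addIr h.
Qed.

Lemma avg_comm {R : realType} {n} M (u a : 'M[R[i]]_n.+1) (q : R[i]) :
  a * u = u * a -> a * avg M u q = avg M u q * a.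
Proof.
move=> au; rewrite /avg -scalerAr -scalerAl; congr (_ *: _).
rewrite mulr_sumr mulr_suml; apply: eq_bigr => i _.
rewrite -scalerAr -scalerAl; congr (_ *: _); apply: commrX; exact: au.
Qed.

Lemma avg_fix {R : realType} {n} M (u : 'M[R[i]]_n.+1) (q : R[i]) (v : 'cV[R[i]]_n.+1) :
  (0 < M)%N -> q != 0 -> u *m v = q *: v -> avg M u q *m v = v.
Proof.
move=> M0 q0 uv.
have uk : forall k, u ^+ k *m v = q ^+ k *: v.
  elim=> [|k IH]; first by rewrite !expr0 -idmxE mul1mx scale1r.
  by rewrite exprSr -mulmxE -mulmxA uv -scalemxAr IH scalerA -exprS.
rewrite /avg -scalemxAl mulmx_suml.
have uk' : forall i, (q^-1 ^+ i *: u ^+ i) *m v = v.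
  move=> i; rewrite -scalemxAl uk (scalerA (q^-1 ^+ i) (q ^+ i) v).
  by rewrite -exprMn (mulVf q0) expr1n scale1r.
under eq_bigr => i _ do rewrite uk'.
rewrite sumr_const card_ord -[v *+ M]scaler_nat (scalerA ((M%:R : R[i])^-1) (M%:R) v) mulVf ?scale1r //.
by rewrite pnatr_eq0 -lt0n.
Qed.

Lemma iso_pow {R : realType} {n} {N : 'cV[R[i]]_n.+1 -> R} (u : 'M[R[i]]_n.+1) :
  (forall v, N (u *m v) = N v) -> forall k v, N (u ^+ k *m v) = N v.
Proof.
move=> hu; elim=> [|k IH] v; first by rewrite expr0 -idmxE mul1mx.
by rewrite exprS -mulmxE -mulmxA hu IH.
Qed.

Lemma nc_invM {R : realType} M : (0 < M)%N -> nc ((M%:R : R[i])^-1) = (M%:R)^-1.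
Proof.
move=> _; rewrite ComplexField.Normc.normcV; congr (_^-1).
by rewrite -[M%:R]/(1 *+ M) normcMn ComplexField.Normc.normc1.
Qed.

Lemma avg_norm {R : realType} {n} {N : 'cV[R[i]]_n.+1 -> R} M (u : 'M[R[i]]_n.+1) (q : R[i]) :
  is_norm N -> (0 < M)%N -> nc q = 1 -> (forall v, N (u *m v) = N v) ->
  forall v, N (avg M u q *m v) <= N v.
Proof.
move=> hN M0 q1 hu v; case: (hN) => h0 _ hZ _.
rewrite /avg -scalemxAl hZ nc_invM // mulmx_suml.
have Mp : (0 < M%:R :> R) by rewrite ltr0n.
rewrite ler_pdivrMl //; apply: le_trans (N_sum hN _ _) _.
under eq_bigr => i _ do rewrite -scalemxAl hZ ncX ComplexField.Normc.normcV q1 invr1 expr1n mul1r (iso_pow u hu).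
by rewrite sumr_const card_ord mulr_natl.
Qed.

Lemma avg_kill {R : realType} {n} M (u : 'M[R[i]]_n.+1) (q : R[i]) (v : 'cV[R[i]]_n.+1) :
  q ^+ M = 1 -> q != 1 -> u *m v = v -> avg M u q *m v = 0.
Proof.
move=> qM q1 uv.
have uk : forall k, u ^+ k *m v = v.
  elim=> [|k IH]; first by rewrite !expr0 -idmxE mul1mx.
  by rewrite exprSr -mulmxE -mulmxA uv IH.
rewrite /avg -scalemxAl mulmx_suml.
under eq_bigr => i _ do rewrite -scalemxAl uk.
rewrite -scaler_suml geom_sum0 ?scale0r ?scaler0 //.
  by rewrite exprVn qM invr1.
by rewrite invr_eq1.
Qed.

Lemma swapVX {R : realType} (w : R[i]) (j k : nat) : ((w ^+ j)^-1) ^+ k = ((w ^+ k)^-1) ^+ j.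
Proof. by rewrite -!exprVn -!exprM mulnC. Qed.

Lemma avg_sum {R : realType} {n} M (u : 'M[R[i]]_n.+1) (w : R[i]) :
  (0 < M)%N -> M.-primitive_root w -> \sum_(j < M) avg M u (w ^+ j) = 1.
Proof.
move=> M0 pw; rewrite /avg -scaler_sumr.
rewrite (exchange_big_dep xpredT) //=.
have inner : forall k : 'I_M, \sum_(j < M) ((w ^+ j)^-1) ^+ k *: u ^+ k =
    (if k == 0%N :> nat then (M%:R : R[i]) else 0) *: u ^+ k.
  move=> k; rewrite -scaler_suml; congr (_ *: _).
  under eq_bigr => j _ do rewrite (swapVX w j k).
  case: eqP => [k0|k0].
    under eq_bigr => j _ do rewrite k0 expr0 invr1 expr1n.
    by rewrite sumr_const card_ord.
  apply: geom_sum0.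
    by rewrite swapVX (prim_expr_order pw) invr1 expr1n.
  rewrite invr_eq1 -(expr0 w) (eq_prim_root_expr pw) modn_small // mod0n.
  by apply/eqP.
under eq_bigr => k _ do rewrite inner.
case: M M0 pw inner => // M _ pw _.
rewrite big_ord_recl /= big1 ?addr0; last by move=> k _; rewrite scale0r.
rewrite expr0 (scalerA ((M.+1%:R : R[i])^-1)) mulVf ?scale1r //.
by rewrite pnatr_eq0.
Qed.

Lemma small_le0 {R : realType} (a d : R) : 0 <= a -> d < 1 -> a <= d * a -> a <= 0.
Proof. move=> *; nra. Qed.

Lemma prim_pow {R : realType} {M} {w : R[i]} j : (0 < M)%N -> M.-primitive_root w ->
  [/\ (w ^+ j) ^+ M = 1, w ^+ j != 0 & nc (w ^+ j) = 1].
Proof.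
move=> M0 pw; split.
- by rewrite exprAC (prim_expr_order pw) expr1n.
- by rewrite expf_neq0 // (prim_neq0 M0 pw).
- by rewrite ncX (prim_nc1 M0 pw) expr1n.
Qed.

Lemma mvA {R : realType} {n} (A B : 'M[R[i]]_n.+1) (v : 'cV[R[i]]_n.+1) :
  A *m (B *m v) = (A * B) *m v.
Proof. by rewrite mulmxA mulmxE. Qed.

Lemma lemmaL {R : realType} {n} {N : 'cV[R[i]]_n.+1 -> R} (x g z : 'M[R[i]]_n.+1)
  M (w : R[i]) (d : R) :
  is_norm N -> (0 < M)%N -> M.-primitive_root w -> x ^+ M = 1 -> z ^+ M = 1 ->
  x * z = z * x -> x * g = z * g * x ->
  (forall v, N (x *m v) = N v) -> (forall v, N (z *m v) = N v) ->
  d < 1 -> (forall v, N ((1%:M - g) *m v) <= d * N v) -> z = 1.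
Proof.
move=> hN M0 pw xM zM xz xg hx hz d1 hg.
case: (hN) => h0 _ hZ _.
pose E (j : nat) := avg M x (w ^+ j).
pose P (l : nat) := avg M z (w ^+ l).
have key : forall (a : 'I_M) (b : 'I_M), (b != 0%N :> nat) -> forall v : 'cV[R[i]]_n.+1, P b *m (E a *m v) = 0.
  move=> j l l0 v.
  have [wjM wj0 wj1] := prim_pow j M0 pw.
  have [wlM wl0 wl1] := prim_pow l M0 pw.
  have xE : x * E j = w ^+ j *: E j by apply: avg_eig.
  have zP : z * P l = w ^+ l *: P l by apply: avg_eig.
  have xP : x * P l = P l * x by apply: avg_comm.
  have zE : z * E j = E j * z by apply: avg_comm.
  set u := P l *m (E j *m v).
  have xu : x *m u = w ^+ j *: u.
    by rewrite /u !mvA xP -mulrA xE -scalerAr -scalemxAl.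
  have zu : z *m u = w ^+ l *: u.
    by rewrite /u !mvA zP -scalerAl -scalemxAl.
  have Eu : E j *m u = u by apply: avg_fix.
  have Pu : P l *m u = u by apply: avg_fix.
  have Ex : E j * x = x * E j by apply/esym/avg_comm.
  have Pkill : forall s : 'cV[R[i]]_n.+1, z *m s = s -> P l *m s = 0.
    move=> s zs; have wl1' : w ^+ l != 1.
      rewrite -(expr0 w) (eq_prim_root_expr pw) modn_small // mod0n.
      exact: l0.
    exact: (avg_kill M z (w ^+ l) s wlM wl1' zs).
  have nE : forall s : 'cV[R[i]]_n.+1, N (P l *m (E j *m s)) <= N s.
    move=> s; apply: le_trans (avg_norm M z _ hN M0 wl1 hz _) _.
    exact: (avg_norm M x _ hN M0 wj1 hx).
  clearbody u; set t := g *m u.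
  have xt : x *m t = w ^+ j *: (z *m t).
    by rewrite /t mvA xg -mvA xu -scalemxAr mvA.
  have tdef : t = g *m u by [].
  clearbody t E P.
  have zEt : z *m (E j *m t) = E j *m t.
    apply: (scalerI wj0).
    have xEc := Ex.
    have h1 : E j *m (x *m t) = w ^+ j *: (E j *m t) by rewrite mvA xEc xE -scalemxAl.
    have h2 : E j *m (x *m t) = w ^+ j *: (z *m (E j *m t)).
      by rewrite xt -scalemxAr (mvA (E j) z t) (mvA z (E j) t) zE.
    by rewrite -h2 h1.
  have PEt : P l *m (E j *m t) = 0 by apply: Pkill.
  have decomp : u = P l *m (E j *m ((1%:M - g) *m u)).
    by rewrite mulmxBl mul1mx !mulmxBr -tdef PEt subr0 Eu Pu.
  have Nu : N u <= d * N u.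
    rewrite {1}decomp; apply: le_trans (nE _) _; exact: hg.
  exact: (N_eq0 hN _ (small_le0 _ _ (h0 u) d1 Nu)).
have hv : forall v : 'cV[R[i]]_n.+1, z *m v = v.
  move=> v.
  have sE : \sum_(j < M) E j = 1 by exact: (avg_sum M x w M0 pw).
  have sP : \sum_(l < M) P l = 1 by exact: (avg_sum M z w M0 pw).
  have Pl0 : forall l : 'I_M, (l != 0%N :> nat) -> P l *m v = 0.
    move=> l l0; rewrite -[v]mul1mx idmxE -sE mulmx_suml mulmx_sumr big1 // => j _.
    exact: key.
  pose o : 'I_M := Ordinal M0.
  have ev : v = P o *m v.
    have rest : \sum_(i < M | i != o) P i *m v = 0.
      apply: big1 => l lo; apply: Pl0; apply: contra lo => /eqP l0; apply/eqP/val_inj.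
      exact: l0.
    by rewrite -{1}[v]mul1mx idmxE -sP mulmx_suml (bigD1 o) //= rest addr0.
  have [oM o0 _] := prim_pow o M0 pw.
  have zP : z * P o = w ^+ o *: P o by apply: avg_eig.
  rewrite ev mvA zP /= expr0 scale1r //.
apply/eqP; rewrite -subr_eq0; apply/eqP; apply: col_eq0 => v.
by rewrite mulmxBl hv -idmxE mul1mx subrr.
Qed.

Lemma count_lt (T : eqType) (a b : pred T) (s : seq T) :
  (forall h, a h -> b h) -> forall h0, h0 \in s -> b h0 -> ~~ a h0 ->
  (count a s < count b s)%N.
Proof.
move=> ab h0; elim: s => // y s IH; rewrite inE /= => /orP [/eqP -> | hs] bh ah.
  rewrite (negPf ah) bh add0n add1n ltnS; apply: sub_count => h; exact: ab.
have := IH hs bh ah; case: (boolP (a y)) => ay.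
  by rewrite (ab _ ay) /= !add1n ltnS.
rewrite add0n => h; apply: leq_trans h _; exact: leq_addl.
Qed.

Lemma comm_of_c {R : realType} {n} (x g : 'M[R[i]]_n.+1) :
  x \in unitmx -> g \in unitmx ->
  (x *m g *m invmx x *m invmx g) *m g *m x = x *m g.
Proof.
move=> ux ug; rewrite -(mulmxA _ (invmx g) g) mulVmx // mulmx1.
by rewrite -mulmxA mulVmx // mulmx1.
Qed.

Theorem mainTheorem5 (R : realType) (n : nat) (N : 'cV[R[i]]_n.+1 -> R)
  (x y : 'M[R[i]]_n.+1) :
  is_norm N ->
  isometry_mx N x -> isometry_mx N y ->
  finite_set (gen2_set x y) ->
  opnorm N (1%:M - x) < 1 / 2 ->
  opnorm N (1%:M - y) < 1 / 2 ->
  x *m y = y *m x.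
Proof.
move=> hN hx hy fin dx dy.
have [ux isx] := hx.
pose d (h : 'M[R[i]]_n.+1) := opnorm N (1%:M - h).
have [X hX] := finite_fsetP.1 fin.
pose s := finmap.enum_fset X.
have ins : forall h, gen2 x y h -> h \in s.
  by move=> h hh; have : gen2_set x y h by []; rewrite hX.
pose mu (g : 'M[R[i]]_n.+1) := count (fun h => d h < d g) s.
suff claim : forall k g, (mu g < k)%N -> gen2 x y g -> d g < 1 / 2 -> x *m g = g *m x.
  by apply: (claim (mu y).+1) => //; exact: gen2_y.
elim=> // k IH g mug gg dg.
have [ug isg] := gen2_iso x y g hx hy gg.
have dg0 := opnorm_ge0 g hN isg.
have [dgz | dgnz] := eqVneq (d g) 0.
  have g1 : g = 1%:M.
    apply/eqP; rewrite -subr_eq0 -oppr_eq0 opprB; apply/eqP; apply: col_eq0 => v.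
    apply: (N_eq0 hN); apply: le_trans (opnorm_bound g hN isg v) _.
    by rewrite -/(d g) dgz mul0r.
  by rewrite g1 mulmx1 mul1mx.
set c := x *m g *m invmx x *m invmx g.
have gc : gen2 x y c.
  apply: gen2_mul; last by apply: gen2_inv.
  apply: gen2_mul; last by apply: gen2_inv; exact: gen2_x.
  by apply: gen2_mul => //; exact: gen2_x.
have [uc isc] := gen2_iso x y c hx hy gc.
have dgp : 0 < d g by rewrite lt_def dgnz dg0.
have dx0 := opnorm_ge0 x hN isx.
have dcg : d c < d g.
  apply: le_lt_trans (comm_bound x g hN ux ug isx isg) _.
  rewrite mulrA -[X in _ < X]mul1r ltr_pM2r //.
  by rewrite -/(d x); move: dx; rewrite /d; lra.
have xc : x *m c = c *m x.
  apply: IH; last by apply: lt_trans dcg dg.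
  - rewrite -ltnS; apply: leq_trans mug; apply: count_lt (ins _ gc) _ _.
    + by move=> h /= hh; apply: lt_trans hh dcg.
    + exact: dcg.
    + by rewrite /= ltxx.
  - exact: gc.
have [Mx [Mx0 xMx]] := gen2_order x y x fin (gen2_x x y) ux.
have [Mc [Mc0 cMc]] := gen2_order x y c fin gc uc.
have M0 : (0 < Mx * Mc)%N by rewrite muln_gt0 Mx0 Mc0.
have [w pw] := prim_root_exists (R := R) _ M0.
have c1 : c = 1.
  apply: (lemmaL x g c (Mx * Mc) w (d g) hN M0 pw).
  - by rewrite exprM xMx expr1n.
  - by rewrite mulnC exprM cMc expr1n.
  - by rewrite -!mulmxE.
  - by rewrite -!mulmxE comm_of_c.
  - exact: isx.
  - exact: isc.
  - by apply: lt_trans dg _; lra.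
  - exact: opnorm_bound g hN isg.
by rewrite -(comm_of_c x g ux ug) -/c c1 -idmxE mul1mx.
Qed.
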